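(* Let $\mathfrak{g}$ be a product by generators. Then $\dim Z(\mathfrak{g})\ge 6$ and $\dim \mathfrak{g}/C^1\mathfrak{g}\ge 4$. In particular, no filiform Lie algebra is a product by generators.
   Context: All Lie algebras are finite-dimensional, complex, nilpotent and nonabelian (in particular the one-dimensional algebra is excluded). $C^1\mathfrak{g}=[\mathfrak{g},\mathfrak{g}]$, $C^{k+1}\mathfrak{g}=[\mathfrak{g},C^k\mathfrak{g}]$, $Z(\mathfrak{g})$ is the center. Product by generators of two algebras $\mathfrak{g}_1,\mathfrak{g}_2$: take bases $\{X_1,\dots,X_{m_1}\}$, $\{X'_1,\dots,X'_{m_2}\}$ such that $X_1,\dots,X_{n_1}$ generate $\mathfrak{g}_1$ and $X_{n_1+1},\dots,X_{m_1}$ span $C^1\mathfrak{g}_1$, and similarly for $\mathfrak{g}_2$ with $n_2$ generators; $\mathfrak{g}_1\underline{\times}\mathfrak{g}_2$ is the Lie algebra on $\mathfrak{g}_1\oplus\mathfrak{g}_2\oplus\langle Z_1,\dots,Z_{n_1n_2}\rangle$ with the brackets of $\mathfrak{g}_1$ and of $\mathfrak{g}_2$, $[X_i,X'_j]=Z_{(i-1)n_2+j}$ for $i\le n_1$, $j\le n_2$, $[X_i,X'_j]=0$ otherwise, and the $Z_k$ central. A nilpotent Lie algebra $\mathfrak{g}$ is called a product by generators if there exist (nonabelian) subalgebras $\mathfrak{h}_1,\mathfrak{h}_2$ with $\mathfrak{g}\cong\mathfrak{h}_1\underline{\times}\mathfrak{h}_2$. A nilpotent Lie algebra of dimension $n$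 is filiform if $\dim C^k\mathfrak{g}=n-k-1$ for $1\le k\le n-1$ (maximal nilindex). *)

(* Defs.v *)
(* The main theorem is stated over K = R[i], R : realType,
   i.e. over the complex numbers. *)
From HB Require Import structures.
From mathcomp Require Import all_boot all_order all_algebra.
Set Implicit Arguments. Unset Strict Implicit. Unset Printing Implicit Defensive.
Import Order.TTheory GRing.Theory Num.Theory.
Local Open Scope ring_scope.

Record lie_algebra (K : fieldType) := LieAlgebra {
  lie_carrier :> vectType K;
  lie_br : lie_carrier -> lie_carrier -> lie_carrier;
  lie_br_linl : forall y, linear (lie_br ^~ y);
  lie_br_linr : forall x, linear (lie_br x);
  lie_br_alt : forall x, lie_br x x = 0;
  lie_jacobi : forall x y z,
    lie_br x (lie_br y z) + lie_br y (lie_br z x) + lie_br z (lie_br x y) = 0 }.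

Section LieDefs.
Variable K : fieldType.
Local Open Scope vspace_scope.

(* [U, V] : the span of all brackets [u, v], u in U, v in V (by bilinearity it is
   spanned by the brackets of basis vectors) *)
Definition lie_brs (g : lie_algebra K) (U V : {vspace g}) : {vspace g} :=
  << [seq lie_br u v | u <- vbasis U, v <- vbasis V] >>.

Fixpoint lcs (g : lie_algebra K) (k : nat) : {vspace g} :=
  if k is k'.+1 then lie_brs fullv (lcs g k') else fullv.

(* center Z(g) = { x | [x, y] = 0 for all y } = intersection over a basis of
   the kernels of x |-> [x, b] *)
Definition lie_center (g : lie_algebra K) : {vspace g} :=
  \bigcap_(b <- vbasis (fullv : {vspace g})) lker (linfun (fun x : g => lie_br x b)).

Definition nilpotent (g : lie_algebra K) : Prop := exists k, lcs g k = 0.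
Definition nonabelian (g : lie_algebra K) : Prop := lcs g 1 != 0.

Definition filiform (g : lie_algebra K) : Prop :=
  forall k, (1 <= k <= \dim (fullv : {vspace g}) - 1)%N ->
    \dim (lcs g k) = (\dim (fullv : {vspace g}) - k - 1)%N.

Definition lie_generates (g : lie_algebra K) (S : seq g) : Prop :=
  forall U : {vspace g}, {subset S <= U} ->
    (forall x y, x \in U -> y \in U -> lie_br x y \in U) -> U = fullv.

Definition lie_embeds (h g : lie_algebra K) : Prop :=
  exists f : 'Hom(h, g), lker f = 0 /\
    forall x y, f (lie_br x y) = lie_br (f x) (f y).

Definition adapted_basis (g : lie_algebra K) n k (Xg : n.-tuple g) (Xc : k.-tuple g)
  : Prop :=
  [/\ basis_of fullv (Xg ++ Xc), <<Xc>> = lcs g 1 & lie_generates Xg].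

Definition gen_coord (g : lie_algebra K) n k (Xg : n.-tuple g) (Xc : k.-tuple g)
  (x : g) : 'rV[K]_n :=
  \row_(i < n) coord (cat_tuple Xg Xc) (lshift k i) x.

(* Bracket of g1 x_ g2 on g1 (+) g2 (+) <Z_(i,j)>, Z-part stored as an n1 x n2
   matrix (entry (i,j) is the coefficient of Z_{(i-1)n2+j}).  It is the bilinear
   extension of the brackets of g1, g2, [X_i, X'_j] = Z_(i,j) for i <= n1, j <= n2,
   [X_i, X'_j] = 0 otherwise, Z central. *)
Definition prod_gen_br (g1 g2 : lie_algebra K) n1 k1 n2 k2
  (X1g : n1.-tuple g1) (X1c : k1.-tuple g1) (X2g : n2.-tuple g2) (X2c : k2.-tuple g2)
  (u v : (g1 * g2 * 'M[K]_(n1, n2))%type) : (g1 * g2 * 'M[K]_(n1, n2))%type :=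
  (lie_br u.1.1 v.1.1, lie_br u.1.2 v.1.2,
   (gen_coord X1g X1c u.1.1)^T *m gen_coord X2g X2c v.1.2
   - (gen_coord X1g X1c v.1.1)^T *m gen_coord X2g X2c u.1.2).

Definition product_by_generators (g : lie_algebra K) : Prop :=
  exists (h1 h2 : lie_algebra K) (n1 k1 n2 k2 : nat)
         (X1g : n1.-tuple h1) (X1c : k1.-tuple h1)
         (X2g : n2.-tuple h2) (X2c : k2.-tuple h2),
    [/\ lie_embeds h1 g, lie_embeds h2 g, nonabelian h1 & nonabelian h2] /\
    [/\ adapted_basis X1g X1c, adapted_basis X2g X2c &
        exists f : 'Hom((h1 * h2 * 'M[K]_(n1, n2))%type, g),
          [/\ lker f = 0, limg f = fullv &
              forall u v, f (prod_gen_br X1g X1c X2g X2c u v)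
                          = lie_br (f u) (f v)]].

End LieDefs.

(* Main.v *)
Require Import Defs.
From HB Require Import structures.
From mathcomp Require Import all_boot all_order all_algebra.
From mathcomp Require Import complex reals.
From mathcomp Require Import zify.
Set Warnings "-notation-overridden,-ambiguous-paths,-redundant-canonical-projection".
Set Implicit Arguments. Unset Strict Implicit. Unset Printing Implicit Defensive.
Import Order.TTheory GRing.Theory Num.Theory.
Local Open Scope ring_scope.

Set Warnings "-notation-overridden,-ambiguous-paths,-redundant-canonical-projection".

Section Br.
Variable K : fieldType.
Variable g : lie_algebra K.
Definition brl (y : g) := fun x : g => lie_br x y.
Definition brr (x : g) := fun y : g => lie_br x y.
HB.instance Definition _ y := GRing.isLinear.Build K g g *:%R (brl y) (lie_br_linl y).
HB.instance Definition _ x := GRing.isLinear.Build K g g *:%R (brr x) (lie_br_linr x).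

Lemma br0l (y : g) : lie_br 0 y = 0. Proof. exact: (linear0 (brl y)). Qed.
Lemma br0r (y : g) : lie_br y 0 = 0. Proof. exact: (linear0 (brr y)). Qed.
Lemma brDl (x y z : g) : lie_br (x + y) z = lie_br x z + lie_br y z.
Proof. exact: (linearD (brl z)). Qed.
Lemma brDr (x y z : g) : lie_br z (x + y) = lie_br z x + lie_br z y.
Proof. exact: (linearD (brr z)). Qed.
Lemma brZl a (x y : g) : lie_br (a *: x) y = a *: lie_br x y.
Proof. by have := lie_br_linl y a x 0; rewrite !addr0 br0l addr0. Qed.
Lemma brZr a (x y : g) : lie_br y (a *: x) = a *: lie_br y x.
Proof. by have := lie_br_linr y a x 0; rewrite !addr0 br0r addr0. Qed.
Lemma br_suml I r (P : pred I) (F : I -> g) y :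
  lie_br (\sum_(i <- r | P i) F i) y = \sum_(i <- r | P i) lie_br (F i) y.
Proof. exact: (linear_sum (brl y)). Qed.
Lemma br_sumr I r (P : pred I) (F : I -> g) y :
  lie_br y (\sum_(i <- r | P i) F i) = \sum_(i <- r | P i) lie_br y (F i).
Proof. exact: (linear_sum (brr y)). Qed.
Lemma brC (x y : g) : lie_br x y = - lie_br y x.
Proof.
have := lie_br_alt (x + y).
rewrite brDl !brDr !lie_br_alt add0r addr0 => /eqP.
by rewrite addr_eq0 => /eqP.
Qed.

Lemma br_mem_brs (U V : {vspace g}) x y :
  x \in U -> y \in V -> lie_br x y \in lie_brs U V.
Proof.
move=> xU yV; rewrite (coord_vbasis xU) (coord_vbasis yV) br_suml.
apply: memv_suml => i _; rewrite brZl br_sumr; apply: memvZ.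
apply: memv_suml => j _; rewrite brZr; apply: memvZ.
apply: memv_span; apply: allpairs_f; apply: mem_nth; by rewrite size_tuple.
Qed.

Lemma brs_sub_C1 (U V : {vspace g}) : (lie_brs U V <= lcs g 1)%VS.
Proof.
apply/span_subvP => w /allpairsP [[u v] [_ _ ->]].
exact: br_mem_brs (memvf _) (memvf _).
Qed.

Lemma center_mem x : (forall y, lie_br x y = 0) -> x \in lie_center g.
Proof.
move=> H; rewrite /lie_center; elim: (tval (vbasis _)) => [|b s IH].
  by rewrite big_nil memvf.
rewrite big_cons memv_cap IH andbT memv_ker.
by rewrite (lfunE (brl b : {linear g -> g})) /= /brl H.
Qed.

Lemma last_nonzero (P : nat -> bool) k :
  P 1%N -> ~~ P k -> (1 <= k)%N -> exists m, [/\ (1 <= m)%N, P m & ~~ P m.+1].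
Proof.
move=> P1; elim: k => [|k IH] // nPk _.
case: k IH nPk => [|k] IH nPk; first by rewrite P1 in nPk.
case: (boolP (P k.+1)) => Pk; first by exists k.+1.
exact: IH.
Qed.

Lemma nilp_center : nilpotent g -> nonabelian g ->
  exists z, [/\ z != 0, z \in lcs g 1 & forall y, lie_br z y = 0].
Proof.
move=> [k0 Hk0] na.
have k0pos : (1 <= k0)%N.
  case: k0 Hk0 => // H0; exfalso; move/eqP: na; apply.
  apply/eqP; rewrite -subv0 -H0; exact: subvf.
have [m [m1 Pm nPm]] := @last_nonzero (fun m => lcs g m != 0%VS) k0 na
  (introT negPn (introT eqP Hk0)) k0pos.
exists (vpick (lcs g m)); split.
- by rewrite vpick0.
- case: m m1 Pm nPm => // m _ _ _; apply: (subvP (brs_sub_C1 _ _)).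
  exact: memv_pick.
- move=> y; rewrite brC; apply/eqP; rewrite oppr_eq0 -memv0.
  move/negPn/eqP: nPm => <-; exact: br_mem_brs (memvf _) (memv_pick _).
Qed.

End Br.



Section Emb.
Variable K : fieldType.
Variables (h g : lie_algebra K) (e : 'Hom(h, g)).
Hypothesis ke : lker e = 0%VS.
Hypothesis me : forall x y, e (lie_br x y) = lie_br (e x) (e y).

Lemma emb_lcs k : (e @: lcs h k <= lcs g k)%VS.
Proof.
elim: k => [|k IH]; first exact: subvf.
rewrite /= /lie_brs limg_span; apply/span_subvP => w /mapP [w' /allpairsP [[u v] [_ hv ->]] ->].
rewrite me; apply: br_mem_brs (memvf _) _.
apply: (subvP IH); apply: memv_img; exact: vbasis_mem hv.
Qed.

Lemma emb_nilp : nilpotent g -> nilpotent h.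
Proof.
move=> [k Hk]; exists k; apply/eqP; rewrite -dimv_eq0.
rewrite -(limg_dim_eq (f := e)); last by rewrite ke capv0.
by rewrite dimv_eq0 -subv0 -Hk emb_lcs.
Qed.
End Emb.

Section Gen.
Variable K : fieldType.
Variable (h : lie_algebra K).

Lemma gen_ge2 n (X : n.-tuple h) : lie_generates X -> nonabelian h -> (2 <= n)%N.
Proof.
move=> gX na; rewrite leqNgt; apply/negP => n1.
have HX : forall x, x \in <<X>>%VS -> x \in <[X`_0]>%VS.
  move=> x; case: X gX => s /= /eqP sz _; move: n1; rewrite -sz.
  case: s {sz} => [|a [|b s]] //= _.
  - by rewrite span_nil memv0 => /eqP ->.
  - by rewrite span_seq1.
have cl : forall x y, x \in <<X>>%VS -> y \in <<X>>%VS -> lie_br x y = 0.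
  move=> x y /HX /vlineP [a ->] /HX /vlineP [b ->].
  by rewrite brZl brZr lie_br_alt !scaler0.
have full : <<X>>%VS = fullv.
  apply: gX; first by move=> x; apply: memv_span.
  by move=> x y hx hy; rewrite cl // mem0v.
move: na; rewrite /nonabelian -subv0 /=; apply/negP/negPn.
apply/span_subvP => w /allpairsP [[u v] [_ _ ->]].
by rewrite cl ?mem0v // full memvf.
Qed.
End Gen.



Section GC.
Variable K : fieldType.
Variables (h : lie_algebra K) (n k : nat) (Xg : n.-tuple h) (Xc : k.-tuple h).
Hypothesis fr : free (Xg ++ Xc).
Let frc : free (cat_tuple Xg Xc). Proof. exact: fr. Qed.

Lemma gc_lin a x y : gen_coord Xg Xc (a *: x + y) = a *: gen_coord Xg Xc x + gen_coord Xg Xc y.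
Proof. by apply/rowP => i; rewrite !mxE linearP. Qed.

Lemma gc0 : gen_coord Xg Xc 0 = 0.
Proof. by apply/rowP => i; rewrite !mxE linear0. Qed.

Lemma gc_Xc x : x \in <<Xc>>%VS -> gen_coord Xg Xc x = 0.
Proof.
move=> /coord_span ->; apply/rowP => i; rewrite !mxE linear_sum big1 // => j _.
rewrite linearZ /=.
have -> : Xc`_j = (cat_tuple Xg Xc)`_(rshift n j).
  by rewrite /= nth_cat size_tuple ltnNge leq_addr /= addKn.
by rewrite coord_free // eq_rlshift mulr0.
Qed.

Lemma gc_surj (r : 'rV[K]_n) : gen_coord Xg Xc (\sum_(j < n) r 0 j *: Xg`_j) = r.
Proof.
apply/rowP => i; rewrite !mxE linear_sum (bigD1 i) //= big1 ?addr0.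
  rewrite linearZ /=.
  have -> : Xg`_i = (cat_tuple Xg Xc)`_(lshift k i).
    by rewrite /= nth_cat size_tuple ltn_ord.
  by rewrite coord_free // eqxx mulr1.
move=> j ji; rewrite linearZ /=.
have -> : Xg`_j = (cat_tuple Xg Xc)`_(lshift k j).
  by rewrite /= nth_cat size_tuple ltn_ord.
by rewrite coord_free // (inj_eq (@lshift_inj _ _)) (negPf ji) mulr0.
Qed.
End GC.



Section Main.
Variable K : fieldType.
Variables (g h1 h2 : lie_algebra K) (n1 k1 n2 k2 : nat)
  (X1g : n1.-tuple h1) (X1c : k1.-tuple h1) (X2g : n2.-tuple h2) (X2c : k2.-tuple h2).

Definition psi (u : (h1 * h2 * 'M[K]_(n1, n2))%type) : ('rV[K]_n1 * 'rV[K]_n2)%type :=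
  (gen_coord X1g X1c u.1.1, gen_coord X2g X2c u.1.2).

Lemma psi_lin : linear psi.
Proof. by move=> a u v; rewrite /psi /= !gc_lin. Qed.
HB.instance Definition _ := GRing.isLinear.Build K _ _ *:%R psi psi_lin.

Definition iota (z1 : h1) (z2 : h2) (u : ('rV[K]_2 * 'M[K]_(n1, n2))%type) :
  (h1 * h2 * 'M[K]_(n1, n2))%type := (u.1 0 0 *: z1, u.1 0 ord_max *: z2, u.2).

Lemma iota_lin z1 z2 : linear (iota z1 z2).
Proof.
move=> a u v; rewrite /iota /= !mxE !scalerDl -!scalerA.
by [].
Qed.
HB.instance Definition _ z1 z2 := GRing.isLinear.Build K _ _ *:%R (iota z1 z2) (iota_lin z1 z2).


Local Notation P := (h1 * h2 * 'M[K]_(n1, n2))%type.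
Let Bp := prod_gen_br X1g X1c X2g X2c.
Variable f : 'Hom(P, g).
Hypotheses (ab1 : adapted_basis X1g X1c) (ab2 : adapted_basis X2g X2c)
  (kf : lker f = 0%VS) (imf : limg f = fullv)
  (hf : forall u v, f (Bp u v) = lie_br (f u) (f v)).

Lemma surj y : exists v, y = f v.
Proof.
have : y \in limg f by rewrite imf memvf.
by case/memv_imgP => v _ ->; exists v.
Qed.

Lemma dimgP : \dim (fullv : {vspace g}) = \dim (fullv : {vspace P}).
Proof. by rewrite -imf limg_dim_eq // kf capv0. Qed.

Lemma fr1 : free (X1g ++ X1c). Proof. by case: ab1 => /basis_free. Qed.
Lemma fr2 : free (X2g ++ X2c). Proof. by case: ab2 => /basis_free. Qed.

Lemma C1_sub : (lcs g 1 <= f @: lker (linfun psi))%VS.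
Proof.
apply/span_subvP => w /allpairsP [[u v] [_ _ ->]] /=.
have [u' ->] := surj u; have [v' ->] := surj v; rewrite -hf.
apply: memv_img; rewrite memv_ker lfunE /= /psi /=.
case: ab1 => _ e1 _; case: ab2 => _ e2 _.
rewrite !gc_Xc ?fr1 ?fr2 ?e1 ?e2 //; exact: br_mem_brs (memvf _) (memvf _).
Qed.

Lemma psi_surj : limg (linfun psi) = fullv.
Proof.
apply/vspaceP => [[r1 r2]]; rewrite memvf; apply/memv_imgP.
exists ((\sum_(j < n1) r1 0 j *: X1g`_j), (\sum_(j < n2) r2 0 j *: X2g`_j), 0);
  first exact: memvf.
by rewrite lfunE /= /psi /= !gc_surj ?fr1 ?fr2.
Qed.

Lemma quot_bound : (n1 + n2 <= \dim (fullv : {vspace g}) - \dim (lcs g 1))%N.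
Proof.
have h1d := dimvS C1_sub.
have h2d : \dim (f @: lker (linfun psi)) = \dim (lker (linfun psi)).
  by rewrite limg_dim_eq // kf capv0.
have := limg_ker_dim (linfun psi) fullv.
have dP : dim ('rV[K]_n1 * 'rV[K]_n2)%type = (n1 + n2)%N.
  by change ((dim 'rV[K]_n1 + dim 'rV[K]_n2)%N = (n1 + n2)%N); rewrite !dim_matrix; lia.
rewrite capfv psi_surj dimvf dP dimgP.
move: h1d; rewrite h2d => A B; rewrite -B; lia.
Qed.


Lemma center_bound (z1 : h1) (z2 : h2) : z1 != 0 -> z2 != 0 ->
  z1 \in lcs h1 1 -> z2 \in lcs h2 1 ->
  (forall y, lie_br z1 y = 0) -> (forall y, lie_br z2 y = 0) ->
  (2 + n1 * n2 <= \dim (lie_center g))%N.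
Proof.
move=> nz1 nz2 c1 c2 H1 H2.
case: ab1 => _ e1 _; case: ab2 => _ e2 _.
have Bi : forall u v, Bp (iota z1 z2 u) v = 0.
  move=> [r m] [[x y] m']; rewrite /Bp /prod_gen_br /iota /=.
  have g1 : gen_coord X1g X1c (r 0 0 *: z1) = 0.
    by apply: gc_Xc; [exact: fr1 | rewrite e1 memvZ].
  have g2 : gen_coord X2g X2c (r 0 ord_max *: z2) = 0.
    by apply: gc_Xc; [exact: fr2 | rewrite e2 memvZ].
  by rewrite !brZl H1 H2 !scaler0 g1 g2 trmx0 mul0mx mulmx0 subrr.
have sub : (f @: (linfun (iota z1 z2) @: fullv) <= lie_center g)%VS.
  apply/subvP => w /memv_imgP [p /memv_imgP [u _ ->] ->].
  apply: center_mem => y; have [v ->] := surj y.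
  by rewrite -hf lfunE /= Bi linear0.
have ki : lker (linfun (iota z1 z2)) = 0%VS.
  apply/eqP; rewrite -subv0; apply/subvP => w; rewrite memv_ker memv0 lfunE /=.
  case: w => r m /eqP H.
  have ha : r 0 0 = 0.
    by move: (congr1 (fun p => p.1.1) H) => /= /eqP; rewrite scaler_eq0 (negPf nz1) orbF => /eqP.
  have hb : r 0 ord_max = 0.
    by move: (congr1 (fun p => p.1.2) H) => /= /eqP; rewrite scaler_eq0 (negPf nz2) orbF => /eqP.
  have hm : m = 0 by move: (congr1 (fun p => p.2) H).
  have hr : r = 0.
    apply/rowP => j; rewrite !mxE; case: j => [[|[|j]]] Hj //.
    - by rewrite -ha; congr (r _ _); apply/val_inj.
    - by rewrite -hb; congr (r _ _); apply/val_inj.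
  by rewrite hr hm.
have dP : dim ('rV[K]_2 * 'M[K]_(n1, n2))%type = (2 + n1 * n2)%N.
  by change ((dim 'rV[K]_2 + dim 'M[K]_(n1, n2))%N = (2 + n1 * n2)%N); rewrite !dim_matrix; lia.
have := dimvS sub.
rewrite limg_dim_eq ?kf ?capv0 // limg_dim_eq ?ki ?capv0 // dimvf dP.
by [].
Qed.
End Main.


Theorem mainTheorem6 (R : realType) (g : lie_algebra R[i]) :
  nilpotent g -> nonabelian g -> product_by_generators g ->
  [/\ (6 <= \dim (lie_center g))%N,
      (4 <= \dim (fullv : {vspace g}) - \dim (lcs g 1))%N
    & ~ filiform g].
Proof.
move=> nil na [h1 [h2 [n1 [k1 [n2 [k2 [X1g [X1c [X2g [X2c [HA HB]]]]]]]]]]].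
case: HA => [[e1 [ke1 me1]] [e2 [ke2 me2]] na1 na2].
case: HB => ab1 ab2 [f [kf imf hf]].
have n1ge : (2 <= n1)%N by case: ab1 => _ _ gX; exact: gen_ge2 gX na1.
have n2ge : (2 <= n2)%N by case: ab2 => _ _ gX; exact: gen_ge2 gX na2.
have [z1 [nz1 c1 H1]] := nilp_center (emb_nilp ke1 me1 nil) na1.
have [z2 [nz2 c2 H2]] := nilp_center (emb_nilp ke2 me2 nil) na2.
have cb := center_bound ab1 ab2 kf imf hf nz1 nz2 c1 c2 H1 H2.
have qb := quot_bound ab1 ab2 kf imf hf.
have nn : (4 <= n1 * n2)%N by rewrite (leq_mul n1ge n2ge).
split.
- exact: leq_trans (leq_add (leqnn 2) nn) cb.
- exact: leq_trans (leq_add n1ge n2ge) qb.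
- move=> fil.
  have E : \dim (lcs g 1) = (\dim (fullv : {vspace g}) - 1 - 1)%N.
    by apply: fil; apply/andP; split => //; lia.
  lia.
Qed.
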